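(* In the setting below, suppose $\max_{g\in G_-}|\delta(g)|=E_k-\lfloor E_k\rfloor_2$. Then $|G_-|\ge \frac{|\mathrm{Co}_0|}{2}\bigl(\lceil E_k\rceil_2-E_k\bigr)$.
   Context: Let $\Lambda_{24}$ be the Leech lattice scaled so minimal vectors have length $2$, $\mathcal C$ its $196560$ minimal vectors, and $\mathrm{Co}_0$ the finite group of linear isometries of $\mathbb{R}^{24}$ mapping $\Lambda_{24}$ onto itself (acting transitively on $\mathcal C$). Fix an antipodal ($S=-S$) set $S\subseteq\mathcal C$ with $\langle x,y\rangle\le1$ for distinct $x,y\in S$. Let $k\ge1$, $S_1=S$, $g_1=\mathrm{id}$, and for $2\le j\le k$, $S_j=g_jS\setminus(S_1\cup\dots\cup S_{j-1})$ for some $g_j\in\mathrm{Co}_0$, with $|S_j|\ge|S|\bigl(1-\sum_{i<j}|S_i|/|\mathcal C|\bigr)$. Put $U_k=S_1\cup\dots\cup S_k$, $E_k=\mathbb{E}_g|gS\cap U_k|$ ($g$ uniform in $\mathrm{Co}_0$). $\lfloor x\rfloor_2$ (resp. $\lceil x\rceil_2$) is the greatest even integer $\le x$ (resp. least even integer $\ge x$). $\delta(g)=|gS\cap U_k|-E_k$, $G_-=\{g:\delta(g)<0\}$. *)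

(* Defs.v *)
From HB Require Import structures.
From mathcomp Require Import all_boot all_order all_algebra.
From mathcomp Require Import finmap.
From mathcomp Require Import all_classical all_reals.
Set Implicit Arguments. Unset Strict Implicit. Unset Printing Implicit Defensive.
Import Order.TTheory GRing.Theory Num.Theory.
Local Open Scope classical_set_scope.
Local Open Scope ring_scope.

(* Coefficients (degree 0..11) of g(x) = 1 + x^2 + x^4 + x^5 + x^6 + x^10 + x^11,
   a generator polynomial of the binary cyclic Golay code of length 23. *)
Definition golay_gen_coefs : seq nat := [:: 1; 0; 1; 0; 1; 1; 1; 0; 0; 0; 1; 1]%N.

(* Generator matrix (12 x 24, entries 0/1) of the extended binary Golay code:
   row i = x^i g(x) on coordinates 0..22, plus an overall parity bit at 23. *)
Definition golay_gen (i : 'I_12) (j : 'I_24) : nat :=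
  if (j < 23)%N then
    (if (i <= j)%N then nth 0%N golay_gen_coefs (j - i) else 0%N)
  else 1%N.

Definition golay (c : 'I_24 -> bool) : Prop :=
  exists a : 'I_12 -> nat,
    forall j : 'I_24, c j = odd (\sum_(i < 12) a i * golay_gen i j)%N.

(* Integer coordinates of the Leech lattice (scaled by sqrt 8):
   x = m*1 + 2c (mod 4) for a Golay codeword c, and sum x = 4m (mod 8). *)
Definition leech_int (x : 'I_24 -> int) : Prop :=
  exists (m : bool) (c : 'I_24 -> bool),
    golay c /\
    (forall i, (x i = (m%N + 2 * c i)%N%:Z %[mod 4])%Z) /\
    ((\sum_(i < 24) x i)%R = (4 * m)%N%:Z %[mod 8])%Z.

Section Leech.
Variable R : realType.

Definition dotv (u v : 'rV[R]_24) : R := (u *m v^T) 0 0.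

(* The Leech lattice in R^24, scaled so that minimal vectors have length 2. *)
Definition leech : set 'rV[R]_24 :=
  [set v | exists x : 'I_24 -> int,
           leech_int x /\ v = \row_i ((x i)%:~R / Num.sqrt 8)].

Definition minvecs : set 'rV[R]_24 :=
  [set v | leech v /\ dotv v v = 4].

Definition act (g : 'M[R]_24) (A : set 'rV[R]_24) : set 'rV[R]_24 :=
  (fun v => v *m g) @` A.

Definition Co0 : set 'M[R]_24 :=
  [set g | (forall v, dotv (v *m g) (v *m g) = dotv v v) /\ act g leech = leech].

Definition setcard (T : choiceType) (A : set T) : nat := #|` fset_set A|%fset.

(* U_n = S_1 u ... u S_n, with S_j = g_j S \ U_{j-1} *)
Fixpoint Useq (S : set 'rV[R]_24) (g : nat -> 'M[R]_24) (n : nat) : set 'rV[R]_24 :=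
  match n with
  | 0 => set0
  | n'.+1 => Useq S g n' `|` (act (g n'.+1) S `\` Useq S g n')
  end.

Definition Sseq (S : set 'rV[R]_24) (g : nat -> 'M[R]_24) (j : nat) : set 'rV[R]_24 :=
  act (g j) S `\` Useq S g j.-1.

(* E_k = E_g |gS n U_k|, g uniform in Co_0 *)
Definition Ek (S : set 'rV[R]_24) (g : nat -> 'M[R]_24) (k : nat) : R :=
  (\sum_(h \in Co0) ((setcard (act h S `&` Useq S g k))%:R : R)) / (setcard Co0)%:R.

Definition deltaf (S : set 'rV[R]_24) (g : nat -> 'M[R]_24) (k : nat) (h : 'M[R]_24) : R :=
  (setcard (act h S `&` Useq S g k))%:R - Ek S g k.

Definition Gminus (S : set 'rV[R]_24) (g : nat -> 'M[R]_24) (k : nat) : set 'M[R]_24 :=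
  [set h | Co0 h /\ deltaf S g k h < 0].

End Leech.

Definition floor2 (R : realType) (x : R) : R := (2 * Num.floor (x / 2))%:~R.
Definition ceil2 (R : realType) (x : R) : R := (2 * Num.ceil (x / 2))%:~R.

(* Main.v *)
Require Import Defs.
From HB Require Import structures.
From mathcomp Require Import all_boot all_order all_algebra.
From mathcomp Require Import finmap.
From mathcomp Require Import all_classical all_reals.
From mathcomp Require Import ring lra zify.
Set Implicit Arguments. Unset Strict Implicit.
Import Order.TTheory GRing.Theory Num.Theory.
Local Open Scope classical_set_scope.
Local Open Scope ring_scope.

Section Aux.
Variable R : realType.
Local Notation V := 'rV[R]_24.

Lemma negv_neq (x : V) : x != 0 -> x != - x.
Proof.
move=> nz; apply/negP => /eqP e; move/negP: nz; apply; apply/eqP/matrixP => i j.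
have := congr1 (fun M : V => M i j) e; rewrite !mxE => /eqP.
by rewrite eq_sym eqNr => /eqP.
Qed.

Lemma even_anti (A : {fset V}) :
  (forall x, x \in A -> - x \in A) -> (0 : V) \notin A -> ~~ odd #|` A|%fset.
Proof.
have [n le] : exists n, (#|` A|%fset <= n)%N by exists #|` A|%fset.
elim: n A le => [|n IH] A le anti n0.
  by move: le; rewrite leqn0 => /eqP ->.
have [/eqP->|] := boolP (A == fset0); first by rewrite cardfs0.
case/fset0Pn => x xA.
have xnz : x != 0 by apply: contraNneq n0 => <-.
have xnx := negv_neq xnz.
have nxA1 : - x \in (A `\ x)%fset by rewrite !inE eq_sym xnx anti.
rewrite (cardfsD1 x) xA (cardfsD1 (- x)) nxA1 /=.
set B := ((A `\ x) `\ - x)%fset.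
have : ~~ odd #|` B|%fset.
  apply: IH.
  - move: le; rewrite (cardfsD1 x) xA (cardfsD1 (- x)) nxA1 /= -/B !addSn add0n ltnS; exact: ltnW.
  - move=> y; rewrite !inE => /and3P [h1 h2 h3].
    rewrite anti // andbT; apply/andP; split.
    + by rewrite eqr_opp.
    + by apply: contra h1 => /eqP <-; rewrite opprK.
  - by rewrite !inE (negbTE n0) !andbF.
by rewrite ?add0n !negbK.
Qed.

Lemma act_anti (h : 'M[R]_24) (S : set V) :
  (fun x => - x) @` S = S -> forall y, act h S y -> act h S (- y).
Proof.
move=> HS y [x Sx <-]; exists (- x); last by rewrite mulNmx.
by rewrite -HS; exists x.
Qed.

Lemma Useq_anti (S : set V) (g : nat -> 'M[R]_24) n :
  (fun x => - x) @` S = S -> forall y, Useq S g n y -> Useq S g n (- y).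
Proof.
move=> HS; elim: n => [|n IH] y //= [Uy|[Ay nUy]]; first by left; apply: IH.
right; split; first exact: act_anti.
by move=> /IH; rewrite opprK.
Qed.

Lemma card_even (S : set V) (g : nat -> 'M[R]_24) k h :
  S `<=` @minvecs R -> (fun x => - x) @` S = S -> Co0 h ->
  ~~ odd (setcard (act h S `&` Useq S g k)).
Proof.
move=> Smin HS [iso _]; rewrite /setcard.
set A := act h S `&` Useq S g k.
have [fA|nfA] := pselect (finite_set A); last first.
  by rewrite /fset_set; case: pselect.
apply: even_anti.
- move=> x; rewrite !in_fset_set // !inE => -[Ax Ux]; split.
  + exact: act_anti.
  + exact: Useq_anti.
- apply/negP; rewrite in_fset_set // inE => -[[x Sx e] _].
  have := iso x; rewrite e; have [_ ->] := Smin x Sx.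
  by rewrite /dotv mul0mx mxE => /eqP; rewrite eq_sym pnatr_eq0.
Qed.

Lemma big_const_R (T : Type) (s : seq T) (E : R) :
  \sum_(h <- s) E = (size s)%:R * E.
Proof.
elim: s => [|a s IH]; first by rewrite big_nil mul0r.
by rewrite big_cons IH /= mulrSr mulrDl mul1r addrC.
Qed.

Lemma key (T : eqType) (s : seq T) (c : T -> R) (b : pred T) (E M D : R) :
  \sum_(h <- s) c h = (size s)%:R * E ->
  (forall h, h \in s -> b h -> E - c h <= M) ->
  (forall h, h \in s -> ~~ b h -> D <= c h - E) ->
  (size s)%:R * D <= (\sum_(h <- s | b h) 1) * (M + D).
Proof.
move=> Hs HM HD.
have H0 : \sum_(h <- s) (c h - E) = 0 by rewrite sumrB Hs big_const_R subrr.
rewrite (bigID b) /= in H0.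
have HA : \sum_(h <- s | b h) (- M) <= \sum_(h <- s | b h) (c h - E).
  rewrite big_seq_cond [X in _ <= X]big_seq_cond; apply: ler_sum => h /andP [hs bh].
  by have := HM h hs bh; lra.
have HB : \sum_(h <- s | ~~ b h) D <= \sum_(h <- s | ~~ b h) (c h - E).
  rewrite big_seq_cond [X in _ <= X]big_seq_cond; apply: ler_sum => h /andP [hs bh].
  exact: HD.
have Hsz : (size s)%:R = \sum_(h <- s | b h) (1 : R) + \sum_(h <- s | ~~ b h) 1.
  by rewrite -[LHS]mulr1 -big_const_R (bigID b).
have eA : \sum_(h <- s | b h) (- M) = (\sum_(h <- s | b h) (1:R)) * (- M).
  by rewrite mulr_suml; apply: eq_bigr => *; rewrite mul1r.
have eB : \sum_(h <- s | ~~ b h) D = (\sum_(h <- s | ~~ b h) (1:R)) * D.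
  by rewrite mulr_suml; apply: eq_bigr => *; rewrite mul1r.
rewrite eA in HA; rewrite eB in HB.
rewrite Hsz.
set a := \sum_(h <- s | b h) (1 : R) in HA Hsz *.
set bb := \sum_(h <- s | ~~ b h) (1 : R) in HB Hsz *.
set A := \sum_(h <- s | b h) (c h - E) in H0 HA.
set B := \sum_(h <- s | ~~ b h) (c h - E) in H0 HB.
nra.
Qed.


Lemma ceil2_floor2 (E : R) : ceil2 E - floor2 E <= 2.
Proof.
rewrite /ceil2 /floor2.
have h1 := ceilB1_lt (E / 2); have h2 := floorD1_gt (E / 2).
have : ((Num.ceil (E / 2) - 1)%:~R : R) < (Num.floor (E / 2) + 1)%:~R by apply: lt_trans h2.
rewrite ltr_int => hi.
have hi' : Num.ceil (E / 2) <= Num.floor (E / 2) + 1 by lia.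
have : ((Num.ceil (E / 2))%:~R : R) <= (Num.floor (E / 2) + 1)%:~R by rewrite ler_int.
rewrite !intrM intrD => h; lra.
Qed.

Lemma even_ge_ceil2 (E : R) (n : nat) : ~~ odd n -> E <= n%:R -> ceil2 E <= n%:R.
Proof.
move=> /even_halfK en hE; rewrite /ceil2.
have e2 : (n%:R : R) = (n./2)%:R * 2 by rewrite -[in LHS]en -muln2 natrM.
have ez : ((n./2)%:Z%:~R : R) = (n./2)%:R by [].
have : Num.ceil (E / 2) <= (n./2)%:Z.
  by rewrite ceil_le_int ez; lra.
rewrite -(ler_int R) ez => h.
rewrite intrM; lra.
Qed.

End Aux.
Unset Implicit Arguments. Set Strict Implicit.
Theorem lemma4p9 (R : realType) (S : set 'rV[R]_24) (k : nat) (g : nat -> 'M[R]_24) :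
  S `<=` @minvecs R ->
  (fun x => - x) @` S = S ->
  (forall x y, S x -> S y -> x <> y -> dotv x y <= 1) ->
  (1 <= k)%N ->
  g 1%N = 1%:M ->
  (forall j, (2 <= j <= k)%N -> @Co0 R (g j)) ->
  (forall j, (1 <= j <= k)%N ->
     ((setcard S)%:R : R) * (1 - (\sum_(1 <= i < j) ((setcard (Sseq S g i))%:R : R)) / (setcard (@minvecs R))%:R)
       <= (setcard (Sseq S g j))%:R) ->
  (exists2 h, Gminus S g k h & `|deltaf S g k h| = Ek S g k - floor2 (Ek S g k)) ->
  (forall h, Gminus S g k h -> `|deltaf S g k h| <= Ek S g k - floor2 (Ek S g k)) ->
  (setcard (@Co0 R))%:R / 2 * (ceil2 (Ek S g k) - Ek S g k) <= (setcard (Gminus S g k))%:R.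
Proof.
move=> Smin HS _ _ _ _ _ _ Hmax.
have [fC|nfC] := pselect (finite_set (@Co0 R)); last first.
  have -> : setcard (@Co0 R) = 0%N by rewrite /setcard /fset_set; case: pselect.
  by rewrite mul0r mul0r natr_ge0.
set X := fset_set (@Co0 R).
set E := Ek S g k.
pose c h := ((setcard (act h S `&` Useq S g k))%:R : R).
pose b := fun h => deltaf S g k h < 0.
have HE : \sum_(h <- X) c h = (size X)%:R * E.
  rewrite /E /Ek fsbig_finite // -/X /setcard -/X.
  have [/eqP sz0|szn] := boolP (size X == 0%N).
    by rewrite (size0nil sz0) big_nil mul0r.
  have : (size X)%:R != 0 :> R by rewrite pnatr_eq0.
  move=> nz; rewrite /c /setcard. change #|` X|%fset with (size X).
  by field.
have Hm : setcard (Gminus S g k) = (\sum_(h <- X | b h) 1)%N.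
  rewrite /setcard.
  have -> : fset_set (Gminus S g k) = [fset h in X | b h]%fset.
    apply/fsetP => h; rewrite in_fset_set; last by apply: sub_finite_set fC => ? [].
    apply/idP/idP => [/set_mem [Ch bh]|]; rewrite ?inE.
    + apply/andP; split => //; have hX : h \in X by rewrite in_fset_set //; apply: mem_set.
      exact: hX.
    + case/andP => hX bh; have hX' : h \in X := hX; split => //.
      by move: hX'; rewrite in_fset_set // => /set_mem.
  by rewrite card_fset_sum1 -big_fset_condE.
have HK := @key R _ X c b E (E - floor2 E) (ceil2 E - E) HE.
have HX : forall h, h \in X -> Co0 h by move=> h; rewrite in_fset_set // inE.
have HK' : (size X)%:R * (ceil2 E - E) <=
    (\sum_(h <- X | b h) 1) * (E - floor2 E + (ceil2 E - E)).
  apply: HK.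
  - move=> h hX bh; have := Hmax h (conj (HX h hX) bh).
    rewrite ltr0_norm //; rewrite /deltaf -/E; lra.
  - move=> h hX bh.
    have ge : E <= c h by move: bh; rewrite /b /deltaf -/E -leNgt; lra.
    have := even_ge_ceil2 (card_even g k Smin HS (HX h hX)) ge.
    rewrite /c; lra.
rewrite Hm natr_sum.
have hcf := ceil2_floor2 E.
have m0 : 0 <= \sum_(h <- X | b h) (1%N%:R : R) by apply: sumr_ge0 => *; rewrite ler0n.
change ((setcard (@Co0 R))%:R) with ((size X)%:R : R).
rewrite -/E; move: HK'; set m := \sum_(h <- X | b h) _.
have m0' : 0 <= m by apply: sumr_ge0 => *; exact: ler01.
move=> HK'; nra.
Qed.
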